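(* Let $h:\{x_1,\dots,x_n\}^*\to\{a_1,\dots,a_k\}^*$ be a solution of rank $n-1$ of both equations $E$ and $E'$, and let $\alpha\in\mathbb N^k$. Then $\mathcal S_E(L(\vartheta_\alpha\circ h))$ and $\mathcal S_{E'}(L(\vartheta_\alpha\circ h))$ are linearly dependent over $\mathbb Q(x)$.
   Context: An equation is a pair $(u,v)$ of words over $\{x_1,\dots,x_n\}$; a solution is a morphism $h$ with $h(u)=h(v)$. For $h:\{x_1,\dots,x_n\}^*\to\{a_1,\dots,a_k\}^*$, $\gamma(h)_i=(|h(x_1)|_{a_i},\dots,|h(x_n)|_{a_i})$ and the rank of $h$ is the dimension of the $\mathbb Q$-span of the $\gamma(h)_i$. $L(h)=(|h(x_1)|,\dots,|h(x_n)|)$. $\mathbb N$ is the positive integers; for $\alpha\in\mathbb N^k$, $\vartheta_\alpha$ is the endomorphism of $\{a_1,\dots,a_k\}^*$ given by $a_i\mapsto a_i^{(\alpha)_i}$. For $E=(x_{i_1}\cdots x_{i_r},\,x_{j_1}\cdots x_{j_s})$, $S_{E,x_j}=\sum_{a:\,i_a=j}\prod_{t=1}^{a-1}X_{i_t}-\sum_{a:\,j_a=j}\prod_{t=1}^{a-1}X_{j_t}$ (empty product $=1$); for $\beta\in\mathbb N_0^n$, $\mathcal S_E(\beta)=(S_{E,x_1}(\beta),\dots,S_{E,x_n}(\beta))\in\mathbb Z[x]^n$ where $p(\beta)$ is the image of $p$ under $X_i\mapsto x^{(\beta)_i}$. *)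

(* Defs.v *)
From HB Require Import structures.
From mathcomp Require Import all_boot all_order all_algebra.
Set Implicit Arguments. Unset Strict Implicit. Unset Printing Implicit Defensive.
Import Order.TTheory GRing.Theory Num.Theory.
Local Open Scope ring_scope.

(* Variables x_1..x_n are 'I_n, letters a_1..a_k are 'I_k; words are seqs. *)
Definition word (T : Type) := seq T.

Definition equation (n : nat) := (seq 'I_n * seq 'I_n)%type.

Definition morph_app (A B : Type) (h : A -> seq B) (w : seq A) : seq B :=
  flatten (map h w).

Definition is_solution (n k : nat) (h : 'I_n -> seq 'I_k) (E : equation n) :=
  morph_app h E.1 = morph_app h E.2.

(* gamma(h) as a k x n rational matrix: row i is gamma(h)_i. *)
Definition gamma_mx (n k : nat) (h : 'I_n -> seq 'I_k) : 'M[rat]_(k, n) :=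
  \matrix_(i < k, j < n) (count_mem i (h j))%:R.

Definition rank_morph (n k : nat) (h : 'I_n -> seq 'I_k) : nat :=
  \rank (gamma_mx h).

Definition Lvec (n k : nat) (h : 'I_n -> seq 'I_k) : 'I_n -> nat :=
  fun j => size (h j).

Definition theta (k : nat) (alpha : 'I_k -> nat) : 'I_k -> seq 'I_k :=
  fun a => nseq (alpha a) a.

Definition comp_morph (n k : nat) (g : 'I_k -> seq 'I_k) (h : 'I_n -> seq 'I_k)
  : 'I_n -> seq 'I_k := fun j => morph_app g (h j).

(* sum over positions a (0-based) with w_a = j of prod_{t<a} x^{beta_{w_t}} *)
Definition S_side (n : nat) (w : seq 'I_n) (j : 'I_n) (beta : 'I_n -> nat)
  : {poly int} :=
  \sum_(a < size w | tnth (in_tuple w) a == j)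
     \prod_(t < a) 'X^(beta (tnth (in_tuple w) (widen_ord (ltnW (ltn_ord a)) t))).

Definition S_E (n : nat) (E : equation n) (j : 'I_n) (beta : 'I_n -> nat)
  : {poly int} := S_side E.1 j beta - S_side E.2 j beta.

Notation Qx := {fraction {poly rat}}.

Definition to_Qx (p : {poly int}) : Qx := tofrac (map_poly intr p).

Definition calS (n : nat) (E : equation n) (beta : 'I_n -> nat) : 'rV[Qx]_n :=
  \row_(j < n) to_Qx (S_E E j beta).

Definition lin_dep2 (F : fieldType) (m : nat) (u v : 'rV[F]_m) : Prop :=
  exists c d : F, (c != 0 \/ d != 0) /\ c *: u + d *: v = 0.

(* Main.v *)
Require Import Defs.
Set Warnings "-notation-overridden,-ambiguous-paths".
From mathcomp Require Import all_boot all_order all_algebra.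
Import Order.TTheory GRing.Theory Num.Theory.
Local Open Scope ring_scope.

Lemma dep_of_ker (F : fieldType) n k (M : 'M[F]_(n,k)) (u v : 'rV_n) :
  (n.-1 <= \rank M)%N -> u *m M = 0 -> v *m M = 0 -> lin_dep2 u v.
Proof.
move=> rM uM vM.
set W := col_mx u v.
have WM : (W <= kermx M)%MS by apply/sub_kermxP; rewrite mul_col_mx uM vM col_mx0.
have rW : (\rank W <= 1)%N.
  apply: (leq_trans (mxrankS WM)); rewrite mxrank_ker.
  move: rM; case: n {u v uM vM W WM} M => //= n' M rM.
  by rewrite leq_subLR addn1 ltnS.
set K := kermx W.
have K0 : K != 0.
  rewrite kermx_eq0 /row_free; apply/negP => /eqP r2.
  by move: rW; rewrite r2.
have [i Hi] : exists i, row i K != 0.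
  case: (pickP (fun i => row i K != 0)) => [i Hi|H]; first by exists i.
  move: K0.
  suff -> : K = 0 by rewrite eqxx.
  by apply/row_matrixP => i; rewrite row0; move: (H i) => /= /negbFE/eqP.
set x := row i K.
have xW : x *m W = 0 by rewrite /x -row_mul mulmx_ker row0.
exists (lsubmx x 0 0), (rsubmx x 0 0); split.
  have [l0|] := eqVneq (lsubmx x 0 0) 0; last by left.
  right; apply/negP => /eqP r0.
  move: Hi; rewrite -/x -[x]hsubmxK (mx11_scalar (lsubmx x)) (mx11_scalar (rsubmx x)).
  by rewrite l0 r0 !raddf0 row_mx0 eqxx.
have -> : lsubmx x 0 0 *: u = lsubmx x *m u by rewrite {2}(mx11_scalar (lsubmx x)) mul_scalar_mx.
have -> : rsubmx x 0 0 *: v = rsubmx x *m v by rewrite {2}(mx11_scalar (rsubmx x)) mul_scalar_mx.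
by rewrite -mul_row_col hsubmxK.
Qed.
Lemma rank_map_le (R : idomainType) (F : fieldType) (f : {rmorphism R -> F})
  m n (A : 'M[R]_(m,n)) :
  (\rank (map_mx f A) <= \rank (map_mx (@tofrac R) A))%N.
Proof.
set N := map_mx f A.
set rf := maxrankfun N.
have rowR : \rank (rowsub rf N) = \rank N by apply/eqP; exact: maxrowsub_free.
set T := (rowsub rf N)^T.
have fT : row_full T by rewrite /row_full mxrank_tr rowR.
set cg := fullrankfun fT.
set S' := rowsub cg (rowsub rf A)^T.
have ES : rowsub cg T = map_mx f S' by apply/matrixP => i j; rewrite !mxE.
have uS : rowsub cg T \in unitmx by rewrite -row_free_unit /row_free mxrank_fullrowsub.
have dS : \det S' != 0.
  apply/negP => /eqP d0; move: uS; rewrite ES unitmxE det_map_mx d0 rmorph0.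
  by rewrite unitr0.
set S2 := rowsub cg (rowsub rf (map_mx (@tofrac R) A))^T.
have ES2 : S2 = map_mx (@tofrac R) S' by apply/matrixP => i j; rewrite !mxE.
have uS2 : S2 \in unitmx by rewrite ES2 unitmxE det_map_mx unitfE tofrac_eq0.
have : \rank S2 = \rank N by move: uS2; rewrite -row_free_unit => /eqP.
move <-.
apply: (leq_trans (mxrankS (rowsub_sub _ _))).
rewrite mxrank_tr; exact: (mxrankS (rowsub_sub _ _)).
Qed.
Fixpoint Srec {n : nat} (w : seq 'I_n) (j : 'I_n) (beta : 'I_n -> nat) : {poly int} :=
  if w is c :: w' then (c == j)%:R + 'X^(beta c) * Srec w' j beta else 0.

Lemma S_side_nat n (w : seq 'I_n) j beta :
  S_side w j beta = \sum_(0 <= a < size w)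
     (nth j w a == j)%:R * \prod_(0 <= t < a) 'X^(beta (nth j w t)).
Proof.
rewrite /S_side big_mkord big_mkcond; apply: eq_bigr => a _.
rewrite (tnth_nth j) /= big_mkord.
under eq_bigr => t _ do rewrite (tnth_nth j) /=.
by case: (nth j w a == j); rewrite ?mul1r ?mul0r.
Qed.

Lemma S_side_rec n (w : seq 'I_n) j beta : S_side w j beta = Srec w j beta.
Proof.
rewrite S_side_nat; elim: w => [|c w IH]; first by rewrite big_geq.
rewrite /= big_nat_recl // -IH big_geq // mulr1; congr (_ + _).
rewrite mulr_sumr; apply: eq_bigr => a _.
by rewrite big_nat_recl //= mulrCA.
Qed.

Fixpoint phi {k : nat} (u : seq 'I_k) (i : 'I_k) : {poly int} :=
  if u is c :: u' then (c == i)%:R + 'X * phi u' i else 0.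

Lemma phi_cat k (u v : seq 'I_k) i :
  phi (u ++ v) i = phi u i + 'X^(size u) * phi v i.
Proof.
elim: u => [|c u IH] /=; first by rewrite add0r expr0 mul1r.
by rewrite IH mulrDr addrA exprS mulrA.
Qed.

Lemma phi_morph n k (g : 'I_n -> seq 'I_k) (w : seq 'I_n) i :
  phi (morph_app g w) i = \sum_j Srec w j (Lvec g) * phi (g j) i.
Proof.
elim: w => [|c w IH]; first by rewrite big1 // => j _; rewrite mul0r.
rewrite /morph_app /= -/(morph_app g w) phi_cat IH.
under eq_bigr => j _ do rewrite mulrDl -mulrA.
rewrite big_split /= -mulr_sumr; congr (_ + _).
rewrite (bigD1 c) //= eqxx mul1r big1 ?addr0 // => j /negbTE.
by rewrite eq_sym => ->; rewrite mul0r.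
Qed.

Lemma morph_app_cat (A B : Type) (g : A -> seq B) u v :
  morph_app g (u ++ v) = morph_app g u ++ morph_app g v.
Proof. by rewrite /morph_app map_cat flatten_cat. Qed.

Lemma morph_app_comp n k (th : 'I_k -> seq 'I_k) (h : 'I_n -> seq 'I_k) w :
  morph_app (comp_morph th h) w = morph_app th (morph_app h w).
Proof.
elim: w => [|c w IH] //=.
rewrite /morph_app /= -/(morph_app _ w) IH -/(morph_app h w).
by rewrite map_cat flatten_cat.
Qed.

Lemma sol_comp n k (th : 'I_k -> seq 'I_k) (h : 'I_n -> seq 'I_k) (E : equation n) :
  is_solution h E -> is_solution (comp_morph th h) E.
Proof. by rewrite /is_solution !morph_app_comp => ->. Qed.

Lemma sol_id n k (g : 'I_n -> seq 'I_k) (E : equation n) i :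
  is_solution g E -> \sum_j S_E E j (Lvec g) * phi (g j) i = 0.
Proof.
move=> Hs; rewrite /S_E.
under eq_bigr => j _ do rewrite !S_side_rec mulrBl.
by rewrite sumrB -!phi_morph Hs subrr.
Qed.

Lemma phi_eval k (u : seq 'I_k) i :
  (map_poly intr (phi u i) : {poly rat}).[1] = (count_mem i u)%:R.
Proof.
elim: u => [|c u IH] /=; first by rewrite rmorph0 horner0.
rewrite rmorphD rmorphM /= rmorph_nat map_polyX hornerD hornerM hornerX IH mul1r.
by rewrite -polyC_natr hornerC natrD.
Qed.

Lemma count_theta k (alpha : 'I_k -> nat) (u : seq 'I_k) i :
  count_mem i (morph_app (theta alpha) u) = (alpha i * count_mem i u)%N.
Proof.
elim: u => [|c u IH] //=; first by rewrite muln0.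
rewrite /morph_app /= -/(morph_app _ u) count_cat IH count_nseq /=.
by case: eqP => [->|_]; rewrite mulnDr ?muln1 ?muln0 ?mul1n ?mul0n ?add0n.
Qed.

Theorem lemma3p2 (n k : nat) (h : 'I_n -> seq 'I_k) (E E' : equation n)
  (alpha : 'I_k -> nat) :
  is_solution h E -> is_solution h E' ->
  rank_morph h = n.-1 ->
  (forall i, (0 < alpha i)%N) ->
  lin_dep2 (calS E (Lvec (comp_morph (theta alpha) h)))
           (calS E' (Lvec (comp_morph (theta alpha) h))).
Proof.
move=> sE sE' rk apos.
set g := comp_morph (theta alpha) h.
set A : 'M[{poly rat}]_(n,k) := \matrix_(j, i) map_poly intr (phi (g j) i).
set M := map_mx (@tofrac _) A.
have key : forall F : equation n, is_solution h F -> calS F (Lvec g) *m M = 0.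
  move=> F sF; apply/rowP => i; rewrite !mxE.
  have H := congr1 (fun p => tofrac (map_poly (intr : int -> rat) p))
    (@sol_id _ _ _ _ i (@sol_comp _ _ (theta alpha) _ _ sF)).
  rewrite /= !rmorph_sum !rmorph0 in H; apply: (eq_trans _ H).
  by apply: eq_bigr => j _; rewrite !mxE /to_Qx !rmorphM.
apply: (@dep_of_ker _ _ _ M); last 2 first.
- exact: key.
- exact: key.
apply: (leq_trans _ (@rank_map_le _ _ (horner_eval (1 : rat)) _ _ A)).
have -> : map_mx (horner_eval 1) A = (gamma_mx g)^T.
  apply/matrixP => j i; by rewrite !mxE /= horner_evalE phi_eval.
rewrite mxrank_tr -rk /rank_morph.
set D := diag_mx (\row_i ((alpha i)%:R^-1 : rat)).
have -> : gamma_mx h = D *m gamma_mx g.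
  apply/matrixP => i j; rewrite mul_diag_mx !mxE count_theta natrM mulrA mulVf ?mul1r //.
  by rewrite pnatr_eq0 -lt0n.
exact: mxrankM_maxr.
Qed.
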